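(* Let $U=\{x\in\mathbb R^4:x^2+x^4>0\}$. A smooth covector field $A$ on $U$ satisfies $L_\xi A=0$ for $\xi\in\{e_{12}-e_{14},\,e_{23}+e_{34},\,e_{24},\,e_1,\,e_3,\,e_2-e_4\}$ if and only if there is a real constant $B$ with $$A=\Big(0,\ \frac{B}{x^2+x^4},\ 0,\ \frac{B}{x^2+x^4}\Big).$$
   Context: Work in $\mathbb R^4$ with Galilean (Cartesian) coordinates $x^1,x^2,x^3,x^4$ of Minkowski space (metric $\mathrm{diag}(-1,-1,-1,1)$). A potential on an open set $U\subseteq\mathbb R^4$ is a smooth covector field $A=A_i\,dx^i$; its components $A_i$ are always those with respect to the coordinates $x^i$, even when written as functions of other variables. For a vector field $\xi=\xi^k\partial_k$ the Lie derivative is $(L_\xi A)_i=\xi^k\partial_kA_i+A_k\partial_i\xi^k$. The vector fields used are, by components $(\xi^1,\xi^2,\xi^3,\xi^4)$: $e_1=(1,0,0,0)$, $e_2=(0,1,0,0)$, $e_3=(0,0,1,0)$, $e_4=(0,0,0,1)$, $e_{12}=(-x^2,x^1,0,0)$, $e_{13}=(x^3,0,-x^1,0)$, $e_{23}=(0,-x^3,x^2,0)$, $e_{14}=(x^4,0,0,x^1)$, $e_{24}=(0,x^4,0,x^2)$, $e_{34}=(0,0,x^4,x^3)$. A potential admits a family of vector fields if $L_\xi A=0$ for each $\xi$ in it (equivalently for every element of their linear span). ''Functions'' are smooth real functions; $\mathrm{ch}=\cosh$, $\mathrm{sh}=\sinh$. *)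

(* Defs.v *)
From Stdlib Require Import Reals List.
From Coquelicot Require Import Coquelicot.
Open Scope R_scope.

Definition vec : Type := (R * R * R * R)%type.
Definition mkv (a b c d : R) : vec := (a, b, c, d).

Inductive idx : Type := I1 | I2 | I3 | I4.

Definition coord (x : vec) (k : idx) : R :=
  match x with (a, b, c, d) =>
    match k with I1 => a | I2 => b | I3 => c | I4 => d end end.

Definition upd (x : vec) (k : idx) (t : R) : vec :=
  match x with (a, b, c, d) =>
    match k with
    | I1 => (t, b, c, d) | I2 => (a, t, c, d)
    | I3 => (a, b, t, d) | I4 => (a, b, c, t) end end.

Definition partial (k : idx) (f : vec -> R) (x : vec) : R :=
  Derive (fun t => f (upd x k t)) (coord x k).

Fixpoint iter_partial (ks : list idx) (f : vec -> R) : vec -> R :=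
  match ks with nil => f | k :: ks' => partial k (iter_partial ks' f) end.

Definition smooth_on (U : vec -> Prop) (f : vec -> R) : Prop :=
  forall (ks : list idx) (x : vec), U x ->
    (forall k, ex_derive (fun t => iter_partial ks f (upd x k t)) (coord x k))
    /\ continuous (iter_partial ks f) x.

(* A covector field / vector field: its components w.r.t. the x^i *)
Definition field : Type := idx -> vec -> R.

Definition sum4 (g : idx -> R) : R := g I1 + g I2 + g I3 + g I4.

Definition lie (xi A : field) (i : idx) (x : vec) : R :=
  sum4 (fun k => xi k x * partial k (A i) x)
  + sum4 (fun k => A k x * partial i (xi k) x).

Definition mkfield (f1 f2 f3 f4 : vec -> R) : field :=
  fun k => match k with I1 => f1 | I2 => f2 | I3 => f3 | I4 => f4 end.

Definition x1 (x : vec) := coord x I1.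
Definition x2 (x : vec) := coord x I2.
Definition x3 (x : vec) := coord x I3.
Definition x4 (x : vec) := coord x I4.
Definition cst (c : R) : vec -> R := fun _ => c.

Definition e1 : field := mkfield (cst 1) (cst 0) (cst 0) (cst 0).
Definition e2 : field := mkfield (cst 0) (cst 1) (cst 0) (cst 0).
Definition e3 : field := mkfield (cst 0) (cst 0) (cst 1) (cst 0).
Definition e4 : field := mkfield (cst 0) (cst 0) (cst 0) (cst 1).
Definition e12 : field := mkfield (fun x => - x2 x) x1 (cst 0) (cst 0).
Definition e13 : field := mkfield x3 (cst 0) (fun x => - x1 x) (cst 0).
Definition e23 : field := mkfield (cst 0) (fun x => - x3 x) x2 (cst 0).
Definition e14 : field := mkfield x4 (cst 0) (cst 0) x1.
Definition e24 : field := mkfield (cst 0) x4 (cst 0) x2.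
Definition e34 : field := mkfield (cst 0) (cst 0) x4 x3.

Definition fadd (a b : field) : field := fun k x => a k x + b k x.
Definition fsub (a b : field) : field := fun k x => a k x - b k x.

Definition admits (U : vec -> Prop) (A xi : field) : Prop :=
  forall i x, U x -> lie xi A i x = 0.

(* Main.v *)
Require Import Defs.
From Stdlib Require Import Reals List Lra.
Import ListNotations.
From Coquelicot Require Import Coquelicot.
Open Scope R_scope.

Ltac red_all := unfold fsub, fadd, e1, e2, e3, e4, e12, e13, e23, e14, e24, e34, mkfield, x1, x2, x3, x4, cst, mkv in *; cbn [upd coord] in *.

Ltac dclosed := repeat match goal with |- context [Derive ?f ?p] =>
  erewrite (is_derive_unique f p) by (auto_derive; first [reflexivity | lra])
end.

Ltac dclosedH := repeat match goal with HH : context [Derive ?f ?p] |- _ =>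
  erewrite (is_derive_unique f p) in HH by (auto_derive; first [reflexivity | lra])
end.

Definition Aex (B : R) : field :=
  mkfield (cst 0) (fun y => B / (x2 y + x4 y)) (cst 0) (fun y => B / (x2 y + x4 y)).


Ltac fin := first [ring | (field; lra) | lra].

Lemma Aex_lie (B : R) xi (Hxi : In xi [fsub e12 e14; fadd e23 e34; e24; e1; e3; fsub e2 e4])
  i (x : vec) : x2 x + x4 x > 0 -> lie xi (Aex B) i x = 0.
Proof.
destruct x as [[[a b] c] d]. intros Hs.
simpl in Hxi.
destruct Hxi as [<-|[<-|[<-|[<-|[<-|[<-|[]]]]]]];
destruct i; unfold lie, sum4, partial, Aex; red_all; dclosed; fin.
Qed.

Lemma upd_upd x k t u : upd (upd x k t) k u = upd x k u.
Proof. destruct x as [[[a b] c] d]; destruct k; reflexivity. Qed.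
Lemma coord_upd x k t : coord (upd x k t) k = t.
Proof. destruct x as [[[a b] c] d]; destruct k; reflexivity. Qed.
Lemma upd_coord x k : upd x k (coord x k) = x.
Proof. destruct x as [[[a b] c] d]; destruct k; reflexivity. Qed.

Lemma loc_U (x : vec) k : x2 x + x4 x > 0 ->
  locally (coord x k) (fun t => x2 (upd x k t) + x4 (upd x k t) > 0).
Proof.
intros Hs. assert (He : 0 < x2 x + x4 x) by lra.
exists (mkposreal _ He). intros t Ht.
unfold ball in Ht; simpl in Ht; unfold AbsRing_ball, abs, minus, plus, opp in Ht; simpl in Ht.
apply Rabs_def2 in Ht.
destruct x as [[[a b] c] d]; destruct k; unfold x2, x4 in *; cbn [upd coord] in *; lra.
Qed.

Lemma key (A : field) :
  (forall xi, In xi [fsub e12 e14; fadd e23 e34; e24; e1; e3; fsub e2 e4] ->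
        admits (fun x : vec => x2 x + x4 x > 0) A xi) ->
  forall x, x2 x + x4 x > 0 ->
  A I1 x = 0 /\ A I3 x = 0 /\ A I4 x = A I2 x /\
  partial I1 (A I2) x = 0 /\ partial I3 (A I2) x = 0 /\
  partial I2 (A I2) x * (x2 x + x4 x) + A I2 x = 0 /\
  partial I4 (A I2) x * (x2 x + x4 x) + A I2 x = 0.
Proof.
intros Hadm x Hx.
pose proof (Hadm (fsub e12 e14) ltac:(simpl; tauto)) as Ha.
pose proof (Hadm (fadd e23 e34) ltac:(simpl; tauto)) as Hb.
pose proof (Hadm e24 ltac:(simpl; tauto)) as Hc.
pose proof (Hadm e1 ltac:(simpl; tauto)) as Hd.
pose proof (Hadm e3 ltac:(simpl; tauto)) as He.
pose proof (Hadm (fsub e2 e4) ltac:(simpl; tauto)) as Hf.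
clear Hadm.
destruct x as [[[a b] c] d].
pose proof (Ha I1 _ Hx) as Ha1. pose proof (Ha I2 _ Hx) as Ha2.
pose proof (Ha I3 _ Hx) as Ha3. pose proof (Ha I4 _ Hx) as Ha4.
pose proof (Hb I1 _ Hx) as Hb1. pose proof (Hb I2 _ Hx) as Hb2.
pose proof (Hb I3 _ Hx) as Hb3. pose proof (Hb I4 _ Hx) as Hb4.
pose proof (Hc I1 _ Hx) as Hc1. pose proof (Hc I2 _ Hx) as Hc2.
pose proof (Hc I3 _ Hx) as Hc3. pose proof (Hc I4 _ Hx) as Hc4.
pose proof (Hd I1 _ Hx) as Hd1. pose proof (Hd I2 _ Hx) as Hd2.
pose proof (Hd I3 _ Hx) as Hd3. pose proof (Hd I4 _ Hx) as Hd4.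
pose proof (He I1 _ Hx) as He1. pose proof (He I2 _ Hx) as He2.
pose proof (He I3 _ Hx) as He3. pose proof (He I4 _ Hx) as He4.
pose proof (Hf I1 _ Hx) as Hf1. pose proof (Hf I2 _ Hx) as Hf2.
pose proof (Hf I3 _ Hx) as Hf3. pose proof (Hf I4 _ Hx) as Hf4.
clear Ha Hb Hc Hd He Hf.
unfold lie, sum4, partial in *. red_all. dclosedH.
set (D11 := Derive (fun t : R => A I1 (t, b, c, d)) a) in *.
set (D12 := Derive (fun t : R => A I2 (t, b, c, d)) a) in *.
set (D13 := Derive (fun t : R => A I3 (t, b, c, d)) a) in *.
set (D14 := Derive (fun t : R => A I4 (t, b, c, d)) a) in *.
set (D21 := Derive (fun t : R => A I1 (a, t, c, d)) b) in *.
set (D22 := Derive (fun t : R => A I2 (a, t, c, d)) b) in *.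
set (D23 := Derive (fun t : R => A I3 (a, t, c, d)) b) in *.
set (D24 := Derive (fun t : R => A I4 (a, t, c, d)) b) in *.
set (D31 := Derive (fun t : R => A I1 (a, b, t, d)) c) in *.
set (D32 := Derive (fun t : R => A I2 (a, b, t, d)) c) in *.
set (D33 := Derive (fun t : R => A I3 (a, b, t, d)) c) in *.
set (D34 := Derive (fun t : R => A I4 (a, b, t, d)) c) in *.
set (D41 := Derive (fun t : R => A I1 (a, b, c, t)) d) in *.
set (D42 := Derive (fun t : R => A I2 (a, b, c, t)) d) in *.
set (D43 := Derive (fun t : R => A I3 (a, b, c, t)) d) in *.
set (D44 := Derive (fun t : R => A I4 (a, b, c, t)) d) in *.
set (a1 := A I1 (a, b, c, d)) in *.
set (a2 := A I2 (a, b, c, d)) in *.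
set (a3 := A I3 (a, b, c, d)) in *.
set (a4 := A I4 (a, b, c, d)) in *.
ring_simplify in Ha1. ring_simplify in Ha2. ring_simplify in Ha3. ring_simplify in Ha4.
ring_simplify in Hb1. ring_simplify in Hb2. ring_simplify in Hb3. ring_simplify in Hb4.
ring_simplify in Hc1. ring_simplify in Hc2. ring_simplify in Hc3. ring_simplify in Hc4.
ring_simplify in Hd1. ring_simplify in Hd2. ring_simplify in Hd3. ring_simplify in Hd4.
ring_simplify in He1. ring_simplify in He2. ring_simplify in He3. ring_simplify in He4.
ring_simplify in Hf1. ring_simplify in Hf2. ring_simplify in Hf3. ring_simplify in Hf4.
clearbody D11 D12 D13 D14 D21 D22 D23 D24 D31 D32 D33 D34 D41 D42 D43 D44 a1 a2 a3 a4.
assert (E42 : D42 = D22) by lra. assert (E41 : D41 = D21) by lra.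
assert (E44 : D44 = D24) by lra. assert (E43 : D43 = D23) by lra.
subst D42 D41 D44 D43 D11 D12 D13 D14 D31 D32 D33 D34.
assert (Z1 : a1 = 0) by lra. subst a1.
assert (Z4 : a4 = a2) by lra. subst a4.
repeat split; lra.
Qed.

Lemma prod_deriv (f g : R -> R) p dg :
  ex_derive f p -> is_derive g p dg -> Derive f p * g p + f p * dg = 0 ->
  is_derive (fun t => f t * g t) p 0.
Proof.
intros Hf Hg E.
pose proof (is_derive_mult f g p _ _ (Derive_correct f p Hf) Hg Rmult_comm) as H.
rewrite <- E. exact H.
Qed.

Definition dsk (k : idx) : R := match k with I2 | I4 => 1 | _ => 0 end.

Lemma h_deriv (A : field) :
  (forall i, smooth_on (fun x : vec => x2 x + x4 x > 0) (A i)) ->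
  (forall xi, In xi [fsub e12 e14; fadd e23 e34; e24; e1; e3; fsub e2 e4] ->
        admits (fun x : vec => x2 x + x4 x > 0) A xi) ->
  forall y k, x2 y + x4 y > 0 ->
  is_derive (fun t => A I2 (upd y k t) * (x2 (upd y k t) + x4 (upd y k t))) (coord y k) 0.
Proof.
intros HA Hadm y k Hy.
apply (prod_deriv (fun t => A I2 (upd y k t)) (fun t => x2 (upd y k t) + x4 (upd y k t)) _ (dsk k)).
- exact (proj1 (HA I2 nil y Hy) k).
- destruct y as [[[a b] c] d]; destruct k; unfold x2, x4, dsk; cbn [upd coord];
  auto_derive; first [reflexivity | ring].
- change (Derive (fun t : R => A I2 (upd y k t)) (coord y k)) with (partial k (A I2) y).
  rewrite upd_coord.
  destruct (key A Hadm y Hy) as (K1 & K3 & K4 & P1 & P3 & P2 & P4).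
  destruct k; unfold dsk.
  + rewrite P1. ring.
  + lra.
  + rewrite P3. ring.
  + lra.
Qed.

Lemma seg (A : field) :
  (forall i, smooth_on (fun x : vec => x2 x + x4 x > 0) (A i)) ->
  (forall xi, In xi [fsub e12 e14; fadd e23 e34; e24; e1; e3; fsub e2 e4] ->
        admits (fun x : vec => x2 x + x4 x > 0) A xi) ->
  forall y k t1 t2,
  (forall t, Rmin t1 t2 <= t <= Rmax t1 t2 -> x2 (upd y k t) + x4 (upd y k t) > 0) ->
  A I2 (upd y k t1) * (x2 (upd y k t1) + x4 (upd y k t1)) =
  A I2 (upd y k t2) * (x2 (upd y k t2) + x4 (upd y k t2)).
Proof.
intros HA Hadm y k t1 t2 HU.
set (F := fun t => A I2 (upd y k t) * (x2 (upd y k t) + x4 (upd y k t))).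
change (F t1 = F t2).
assert (HD : forall t, Rmin t1 t2 <= t <= Rmax t1 t2 -> is_derive F t 0).
{ intros t Ht. pose proof (h_deriv A HA Hadm (upd y k t) k (HU t Ht)) as H.
  rewrite coord_upd in H.
  eapply is_derive_ext; [|exact H]. intros u; simpl. rewrite upd_upd. reflexivity. }
destruct (Rtotal_order t1 t2) as [Hlt|[Heq|Hgt]].
- apply (eq_is_derive F t1 t2); auto.
  intros t Ht; apply HD. rewrite Rmin_left, Rmax_right; lra.
- subst; reflexivity.
- symmetry. apply (eq_is_derive F t2 t1); auto.
  intros t Ht; apply HD. rewrite Rmin_right, Rmax_left; lra.
Qed.

Ltac side := intros t Ht; unfold x2, x4; cbn [upd coord];
  unfold Rmin, Rmax in Ht; destruct Rle_dec; lra.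

Theorem mainTheorem18 :
  let U := fun x : vec => x2 x + x4 x > 0 in
  forall A : field,
    (forall i, smooth_on U (A i)) ->
    ((forall xi, In xi [fsub e12 e14; fadd e23 e34; e24; e1; e3; fsub e2 e4] ->
        admits U A xi)
     <->
     exists B : R, forall x, U x ->
       A I1 x = 0 /\ A I2 x = B / (x2 x + x4 x) /\
       A I3 x = 0 /\ A I4 x = B / (x2 x + x4 x)).
Proof.
intros U A HA. unfold U in *. split.
- intros Hadm. exists (A I2 (0,1,0,0)).
  intros x Hx.
  destruct (key A Hadm x Hx) as (K1 & K3 & K4 & _).
  assert (E : A I2 x * (x2 x + x4 x) = A I2 (0,1,0,0)).
  { destruct x as [[[a b] c] d]. unfold x2, x4 in *; cbn [coord] in *.
    set (M := 2 + Rabs b + Rabs d).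
    pose proof (Rle_abs b). pose proof (Rle_abs d).
    pose proof (Rle_abs (-b)). pose proof (Rle_abs (-d)).
    rewrite Rabs_Ropp in *.
    pose proof (seg A HA Hadm (a,b,c,d) I1 a 0 ltac:(side)) as G1.
    pose proof (seg A HA Hadm (0,b,c,d) I3 c 0 ltac:(side)) as G2.
    pose proof (seg A HA Hadm (0,b,0,d) I2 b M ltac:(unfold M in *; side)) as G3.
    pose proof (seg A HA Hadm (0,M,0,d) I4 d 0 ltac:(unfold M in *; side)) as G4.
    pose proof (seg A HA Hadm (0,M,0,0) I2 M 1 ltac:(unfold M in *; side)) as G5.
    unfold x2, x4 in G1, G2, G3, G4, G5; cbn [upd coord] in G1, G2, G3, G4, G5.
    rewrite G1, G2, G3, G4, G5. ring. }
  split; [exact K1|]. split; [|split; [exact K3|]].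
  + rewrite <- E. field. lra.
  + rewrite K4, <- E. field. lra.
- intros [B HB] xi Hin i x Hx.
  assert (vA : forall k y, x2 y + x4 y > 0 -> A k y = Aex B k y).
  { intros k y Hy. destruct (HB y Hy) as (Q1 & Q2 & Q3 & Q4).
    destruct k; unfold Aex, mkfield, cst; assumption. }
  assert (pA : forall k j, partial k (A j) x = partial k (Aex B j) x).
  { intros k j. unfold partial. apply Derive_ext_loc.
    eapply filter_imp; [|apply (loc_U x k Hx)].
    intros t Ht. apply vA. exact Ht. }
  rewrite <- (Aex_lie B xi Hin i x Hx).
  unfold lie, sum4; cbv beta.
  rewrite !pA, !(vA _ x Hx). reflexivity.
Qed.
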